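(* Let $\mathbf{Y}$ be a generalised binary matrix and let $(\ell,k)$ be a simplicial $1$ of $\mathbf{Y}$. If $\mathbf{Y}'$ is the generalised binary matrix obtained by removing the simplicial $1$ at $(\ell,k)$, then $i(\mathbf{Y})=i(\mathbf{Y}')+1$ and $br(\mathbf{Y})=br(\mathbf{Y}')+1$.
   Context: A generalised binary matrix is a matrix with entries in $\{0,1,?\}$; a (standard) binary matrix has entries in $\{0,1\}$. For such a matrix $\mathbf{Y}$, $\mathrm{supp}(\mathbf{Y})=\{(i,j): y_{i,j}=1\}$. A rectangle of $\mathbf{Y}$ is a set $I\times J$ of positions (with $I$ a set of rows, $J$ a set of columns) such that no entry $y_{i,j}$ with $(i,j)\in I\times J$ equals $0$. An isolated set of $\mathbf{Y}$ is a subset of $\mathrm{supp}(\mathbf{Y})$ no two distinct elements of which lie in a common rectangle of $\mathbf{Y}$; $i(\mathbf{Y})$ is the maximum size of an isolated set. $br(\mathbf{Y})$ is the minimum number of rectangles of $\mathbf{Y}$ whose union contains $\mathrm{supp}(\mathbf{Y})$ (entries equal to $?$ may be covered but need not be). A position $(\ell,k)\in\mathrm{supp}(\mathbf{Y})$ is a simplicial $1$ of $\mathbf{Y}$ if, with $I=\{i: y_{i,k}\in\{1,?\}\}$ and $J=\{j: y_{\ell,j}\in\{1,?\}\}$, the set $I\times J$ is a rectangle of $\mathbf{Y}$. Removing the simplicial $1$ at $(\ell,k)$ means deleting row $\ell$ and column $k$ of $\mathbf{Y}$ and replacing every remaining entry with position in $I\times J$ by $?$. *)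

(* Defs.v *)
From HB Require Import structures.
From mathcomp Require Import all_boot all_algebra.
Set Implicit Arguments. Unset Strict Implicit. Unset Printing Implicit Defensive.

(* Entries of a generalised binary matrix: 0, 1, or ? *)
Inductive entry := E0 | E1 | Eq.

Definition entry_eqb (a b : entry) : bool :=
  match a, b with E0, E0 | E1, E1 | Eq, Eq => true | _, _ => false end.
Lemma entry_eqP : Equality.axiom entry_eqb.
Proof. by case; case; constructor. Qed.
HB.instance Definition _ := hasDecEq.Build entry entry_eqP.

Section GBM.
Variables (m n : nat).
Implicit Type Y : 'M[entry]_(m, n).

Definition supp Y : {set 'I_m * 'I_n} := [set p | Y p.1 p.2 == E1].

Definition is_rect Y (I : {set 'I_m}) (J : {set 'I_n}) : bool :=
  [forall i in I, forall j in J, Y i j != E0].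

Definition isolated Y (S : {set 'I_m * 'I_n}) : bool :=
  (S \subset supp Y) &&
  [forall p in S, forall q in S, (p != q) ==>
     ~~ [exists I : {set 'I_m}, exists J : {set 'I_n},
           [&& is_rect Y I J, p.1 \in I, p.2 \in J, q.1 \in I & q.2 \in J]]].

Definition iso_num Y : nat := \max_(S : {set 'I_m * 'I_n} | isolated Y S) #|S|.

Definition rect_cover Y (F : {set {set 'I_m} * {set 'I_n}}) : bool :=
  [forall R in F, is_rect Y R.1 R.2] &&
  [forall p in supp Y, exists R in F, (p.1 \in R.1) && (p.2 \in R.2)].

Definition cover_of_size Y (k : nat) : bool :=
  [exists F : {set {set 'I_m} * {set 'I_n}}, rect_cover Y F && (#|F| == k)].

Lemma cover_exists Y : exists k, cover_of_size Y k.
Proof.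
pose F := [set ([set p.1], [set p.2]) | p in supp Y].
exists #|F|; apply/existsP; exists F; rewrite eqxx andbT.
apply/andP; split.
  apply/forallP => R; apply/implyP => /imsetP [p Hp ->] /=.
  apply/forallP => i; apply/implyP; rewrite in_set1 => /eqP ->.
  apply/forallP => j; apply/implyP; rewrite in_set1 => /eqP ->.
  by move: Hp; rewrite inE => /eqP ->.
apply/forallP => p; apply/implyP => Hp; apply/existsP.
exists ([set p.1], [set p.2]); rewrite !in_set1 !eqxx !andbT.
by apply/imsetP; exists p.
Qed.

Definition br_num Y : nat := ex_minn (cover_exists Y).

End GBM.

Definition simplicial m n (Y : 'M[entry]_(m, n)) (l : 'I_m) (k : 'I_n) : bool :=
  (Y l k == E1) &&
  is_rect Y [set i | Y i k != E0] [set j | Y l j != E0].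

Definition remove_simplicial m n (Y : 'M[entry]_(m.+1, n.+1))
    (l : 'I_m.+1) (k : 'I_n.+1) : 'M[entry]_(m, n) :=
  \matrix_(i < m, j < n)
    if (Y (lift l i) k != E0) && (Y l (lift k j) != E0) then Eq
    else Y (lift l i) (lift k j).

(* Main.v *)
Require Import Defs.
From mathcomp Require Import all_boot all_algebra.
Set Implicit Arguments. Unset Strict Implicit. Unset Printing Implicit Defensive.

Lemma rectP m n (Y : 'M[entry]_(m, n)) (I : {set 'I_m}) (J : {set 'I_n}) :
  reflect (forall i j, i \in I -> j \in J -> Y i j != E0) (is_rect Y I J).
Proof.
apply: (iffP forallP) => H.
  move=> i j Hi Hj.
  by have /implyP/(_ Hi)/forallP/(_ j)/implyP/(_ Hj) := H i.
move=> i; apply/implyP=> Hi; apply/forallP=> j; apply/implyP=> Hj; exact: H.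
Qed.

Lemma isoI m n (Y : 'M[entry]_(m, n)) (S : {set 'I_m * 'I_n}) :
  (forall p, p \in S -> Y p.1 p.2 = E1) ->
  (forall p q, p \in S -> q \in S -> p != q -> forall I J, is_rect Y I J ->
     p.1 \in I -> p.2 \in J -> q.1 \in I -> q.2 \in J -> False) ->
  isolated Y S.
Proof.
move=> H1 H2; apply/andP; split.
  by apply/subsetP=> p /H1 Hp; rewrite inE Hp.
apply/forallP=> p; apply/implyP=> Hp; apply/forallP=> q; apply/implyP=> Hq.
apply/implyP=> Hpq; apply/negP=> /existsP [I /existsP [J /and5P [R a b c d]]].
exact: (H2 p q Hp Hq Hpq I J R a b c d).
Qed.

Lemma isoE1 m n (Y : 'M[entry]_(m, n)) (S : {set 'I_m * 'I_n}) p :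
  isolated Y S -> p \in S -> Y p.1 p.2 = E1.
Proof. by case/andP=> /subsetP H _ /H; rewrite inE => /eqP. Qed.

Lemma isoE2 m n (Y : 'M[entry]_(m, n)) (S : {set 'I_m * 'I_n}) p q (I : {set 'I_m}) (J : {set 'I_n}) :
  isolated Y S -> p \in S -> q \in S -> p != q -> is_rect Y I J ->
     p.1 \in I -> p.2 \in J -> q.1 \in I -> q.2 \in J -> False.
Proof.
case/andP=> _ /forallP H Hp Hq Hpq R a b c d.
have /implyP/(_ Hp)/forallP/(_ q)/implyP/(_ Hq)/implyP/(_ Hpq)/negP := H p.
apply; apply/existsP; exists I; apply/existsP; exists J; exact/and5P.
Qed.

Lemma simpl_rect m n (Y : 'M[entry]_(m, n)) l k :
  simplicial Y l k -> forall i j, Y i k != E0 -> Y l j != E0 -> Y i j != E0.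
Proof.
case/andP=> _ /rectP H i j Hi Hj; apply: H; by rewrite inE.
Qed.

Lemma rem0 m n (Y : 'M[entry]_(m.+1, n.+1)) l k i j :
  simplicial Y l k ->
  (remove_simplicial Y l k i j == E0) = (Y (lift l i) (lift k j) == E0).
Proof.
move=> Hs; rewrite mxE; case: ifP => // /andP [a b].
by apply/esym/negbTE; apply: (simpl_rect Hs).
Qed.

Lemma rem1 m n (Y : 'M[entry]_(m.+1, n.+1)) l k i j :
  (remove_simplicial Y l k i j = E1) <->
  (Y (lift l i) (lift k j) = E1 /\
   ~~ ((Y (lift l i) k != E0) && (Y l (lift k j) != E0))).
Proof.
rewrite mxE; case: ifP => H; split => //; first by case.
by case.
Qed.

Lemma rect_up m n (Y : 'M[entry]_(m.+1, n.+1)) l k (A : {set _}) (B : {set _}) :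
  simplicial Y l k -> is_rect (remove_simplicial Y l k) A B ->
  is_rect Y (lift l @: A) (lift k @: B).
Proof.
move=> Hs /rectP H; apply/rectP=> i j /imsetP [i' Hi ->] /imsetP [j' Hj ->].
by rewrite -(rem0 _ _ Hs); apply: H.
Qed.

Lemma rect_down m n (Y : 'M[entry]_(m.+1, n.+1)) l k (A : {set _}) (B : {set _}) :
  simplicial Y l k -> is_rect Y A B ->
  is_rect (remove_simplicial Y l k) (lift l @^-1: A) (lift k @^-1: B).
Proof.
move=> Hs /rectP H; apply/rectP=> i j; rewrite !inE => Hi Hj.
by rewrite (rem0 _ _ Hs); apply: H.
Qed.

Definition liftp m n (l : 'I_m.+1) (k : 'I_n.+1) (p : 'I_m * 'I_n) :=
  (lift l p.1, lift k p.2).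

Lemma liftp_inj m n (l : 'I_m.+1) (k : 'I_n.+1) : injective (liftp l k).
Proof.
by case=> a b [c d] H; rewrite /liftp in H; move: (congr1 fst H) (congr1 snd H) => /= /lift_inj -> /lift_inj ->.
Qed.

Lemma key m n (Y : 'M[entry]_(m.+1, n.+1)) l k (x : 'I_m.+1 * 'I_n.+1) :
  simplicial Y l k -> Y x.1 x.2 = E1 ->
  (exists p, x = liftp l k p /\ remove_simplicial Y l k p.1 p.2 = E1) \/
  (Y x.1 k != E0 /\ Y l x.2 != E0).
Proof.
case/andP=> /eqP Hlk _; case: x => a b /= Hab.
case: (unliftP l a) => [a'|] Ha; last first.
  by right; rewrite Ha Hlk -Ha Hab.
case: (unliftP k b) => [b'|] Hb; last first.
  by right; rewrite Hb Hlk -Hb Hab.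
case E: ((Y a k != E0) && (Y l b != E0)).
  by right; case/andP: E.
left; exists (a', b'); rewrite /liftp /= -Ha -Hb; split => //.
by apply/rem1; rewrite -Ha -Hb E.
Qed.

Lemma simp_rect2 m n (Y : 'M[entry]_(m, n)) l k :
  simplicial Y l k -> is_rect Y [set i | Y i k != E0] [set j | Y l j != E0].
Proof. by case/andP. Qed.

Lemma iso_max m n (Y : 'M[entry]_(m, n)) :
  exists2 S, isolated Y S & iso_num Y = #|S|.
Proof.
have H0 : 0 < #|[pred S | isolated Y S]|.
  apply/card_gt0P; exists set0; rewrite inE /=.
  by apply: isoI => [p|p q]; rewrite inE.
have [S HS E] := eq_bigmax_cond (fun S : {set 'I_m * 'I_n} => #|S|) H0.
by exists S; [move: HS; rewrite inE | rewrite /iso_num -E].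
Qed.

Lemma iso_le m n (Y : 'M[entry]_(m, n)) S : isolated Y S -> #|S| <= iso_num Y.
Proof. move=> H; rewrite /iso_num; exact: (@leq_bigmax_cond _ (isolated Y) (fun S : {set _} => #|S|) _ H). Qed.

Lemma iso1 m n (Y : 'M[entry]_(m.+1, n.+1)) l k :
  simplicial Y l k -> (iso_num (remove_simplicial Y l k)).+1 <= iso_num Y.
Proof.
move=> Hs; set Y' := remove_simplicial Y l k.
have [S' HS' ->] := iso_max Y'.
set S := (l, k) |: [set liftp l k p | p in S'].
have HS : #|S| = #|S'|.+1.
  rewrite cardsU1 card_imset; last exact: liftp_inj.
  suff -> : (l, k) \notin [set liftp l k p | p in S'] by [].
  apply/imsetP => -[p _ /(congr1 fst) /= E].
  by move: (neq_lift l p.1); rewrite -E eqxx.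
rewrite -HS; apply: iso_le.
have memS : forall x, x \in S -> x = (l, k) \/ exists2 p, p \in S' & x = liftp l k p.
  move=> x; rewrite !inE => /orP [/eqP ->|/imsetP [p Hp ->]]; first by left.
  by right; exists p.
have mixed : forall p, p \in S' -> forall I J, is_rect Y I J -> l \in I -> k \in J ->
    lift l p.1 \in I -> lift k p.2 \in J -> False.
  move=> p Hp I J /rectP R a b c d.
  have /rem1 [_ /negP] := isoE1 HS' Hp; apply; apply/andP; split; exact: R.
apply: isoI.
  move=> x /memS [->|[p Hp ->]]; first by case/andP: Hs => /eqP.
  by have /rem1 [] := isoE1 HS' Hp.
move=> x y /memS [->|[p Hp ->]] /memS [->|[q Hq ->]] Hxy I J R a b c d.
- by rewrite eqxx in Hxy.
- exact: (mixed q Hq I J R).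
- exact: (mixed p Hp I J R).
have Hpq : p != q by apply: contraNneq Hxy => ->.
apply: (isoE2 HS' Hp Hq Hpq (rect_down Hs R)); by rewrite inE.
Qed.

Lemma iso2 m n (Y : 'M[entry]_(m.+1, n.+1)) l k :
  simplicial Y l k -> iso_num Y <= (iso_num (remove_simplicial Y l k)).+1.
Proof.
move=> Hs; set Y' := remove_simplicial Y l k.
have [S HS ->] := iso_max Y.
set S0 := [set p | (liftp l k p \in S) && (Y' p.1 p.2 == E1)].
have HS0 : isolated Y' S0.
  apply: isoI.
    by move=> p; rewrite inE => /andP [_ /eqP].
  move=> p q; rewrite !inE => /andP [Hp _] /andP [Hq _] Hpq I J R a b c d.
  have Hpq' : liftp l k p != liftp l k q by rewrite (inj_eq (@liftp_inj _ _ l k)).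
  apply: (isoE2 HS Hp Hq Hpq' (rect_up Hs R)); apply: imset_f => //.
set img := [set liftp l k p | p in S0].
have Hd : #|S :\: img| <= 1.
  rewrite leqNgt; apply/card_gt1P => -[x [y [Hx Hy Hxy]]].
  have inIJ : forall z, z \in S :\: img -> Y z.1 k != E0 /\ Y l z.2 != E0.
    move=> z; rewrite inE => /andP [Hz Hzs].
    case: (key Hs (isoE1 HS Hzs)) => // -[p [Ep Hp]].
    move/negP: Hz; case; rewrite Ep; apply: imset_f; rewrite inE -Ep Hzs /=.
    by apply/eqP.
  have [x1 x2] := inIJ x Hx; have [y1 y2] := inIJ y Hy.
  move: Hx Hy; rewrite !inE => /andP [_ Hx] /andP [_ Hy].
  apply: (isoE2 HS Hx Hy Hxy (simp_rect2 Hs)); by rewrite inE.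
have EE := cardsID img S.
have : #|S :&: img| <= #|S0|.
  rewrite -(card_imset _ (@liftp_inj _ _ l k)).
  by apply: subset_leq_card; apply: subsetIr.
move: (iso_le HS0) => H1 H2.
apply: (@leq_trans (#|S :&: img| + #|S :\: img|)); first by rewrite EE.
rewrite -[(iso_num Y').+1]addn1; apply: leq_add => //; exact: leq_trans H2 H1.
Qed.

Lemma br_le m n (Y : 'M[entry]_(m, n)) F : rect_cover Y F -> br_num Y <= #|F|.
Proof.
move=> H; rewrite /br_num; case: ex_minnP => b _; apply.
by apply/existsP; exists F; rewrite H eqxx.
Qed.

Lemma br_min m n (Y : 'M[entry]_(m, n)) :
  exists2 F, rect_cover Y F & br_num Y = #|F|.
Proof.
rewrite /br_num; case: ex_minnP => b /existsP [F /andP [H /eqP E]] _.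
by exists F.
Qed.

Lemma coverE m n (Y : 'M[entry]_(m, n)) F :
  rect_cover Y F <->
  ((forall R, R \in F -> is_rect Y R.1 R.2) /\
   (forall p, Y p.1 p.2 = E1 -> exists2 R, R \in F & (p.1 \in R.1) && (p.2 \in R.2))).
Proof.
split.
  case/andP=> /forallP H1 /forallP H2; split.
    by move=> R HR; move/implyP: (H1 R); apply.
  move=> p Hp; have /implyP := H2 p; rewrite inE Hp eqxx => /(_ isT).
  by case/existsP => R /andP [a b]; exists R.
case=> H1 H2; apply/andP; split.
  by apply/forallP => R; apply/implyP; apply: H1.
apply/forallP => p; apply/implyP; rewrite inE => /eqP /H2 [R a b].
by apply/existsP; exists R; rewrite a b.
Qed.

Lemma br1 m n (Y : 'M[entry]_(m.+1, n.+1)) l k :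
  simplicial Y l k -> br_num Y <= (br_num (remove_simplicial Y l k)).+1.
Proof.
move=> Hs; set Y' := remove_simplicial Y l k.
have [F' /coverE [HF1 HF2] ->] := br_min Y'.
set I0 := [set i | Y i k != E0]; set J0 := [set j | Y l j != E0].
set G := [set (lift l @: R.1, lift k @: R.2) | R : {set 'I_m} * {set 'I_n} in F'].
set F := (I0, J0) |: G.
have HF : #|F| <= #|F'|.+1.
  rewrite cardsU1 -[#|F'|.+1]add1n; apply: leq_add; first by case: (_ \notin _).
  exact: leq_imset_card.
apply: leq_trans HF; apply: br_le; apply/coverE; split.
  move=> R; rewrite !inE => /orP [/eqP -> /=|/imsetP [R' HR' ->] /=].
    exact: simp_rect2.
  exact: rect_up (HF1 _ HR').
move=> x /(key Hs) [[p [-> Hp]]|[a b]].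
  have [R' HR' /andP [a b]] := HF2 _ Hp.
  exists (lift l @: R'.1, lift k @: R'.2).
    by rewrite inE; apply/orP; right; apply: imset_f.
  by rewrite /= !imset_f.
by exists (I0, J0); rewrite ?inE ?eqxx //= a b.
Qed.

Lemma br2 m n (Y : 'M[entry]_(m.+1, n.+1)) l k :
  simplicial Y l k -> (br_num (remove_simplicial Y l k)).+1 <= br_num Y.
Proof.
move=> Hs; set Y' := remove_simplicial Y l k.
have [F /coverE [HF1 HF2] ->] := br_min Y.
have [R0 HR0 /andP [Hl Hk]] := HF2 (l, k) (elimT eqP (proj1 (andP Hs))).
set F' := [set (lift l @^-1: R.1, lift k @^-1: R.2) | R : {set 'I_m.+1} * {set 'I_n.+1} in F :\ R0].
rewrite (cardsD1 R0 F) HR0 add1n ltnS.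
apply: (@leq_trans #|F'|); last exact: leq_imset_card.
apply: br_le; apply/coverE; split.
  move=> R /imsetP [R' HR' ->] /=; apply: rect_down => //.
  by apply: HF1; move: HR'; rewrite inE => /andP [].
move=> p /rem1 [Hp Hn].
have [R HR /andP [a b]] := HF2 (liftp l k p) Hp.
have HRR0 : R != R0.
  apply/eqP => E; move/negP: Hn; apply; subst R.
  by move/rectP: (HF1 _ HR) => H; rewrite !H.
exists (lift l @^-1: R.1, lift k @^-1: R.2).
  by apply: imset_f; rewrite !inE HRR0.
by rewrite /= !inE a b.
Qed.

Theorem lemma1 (m n : nat) (Y : 'M[entry]_(m.+1, n.+1))
    (l : 'I_m.+1) (k : 'I_n.+1) :
  simplicial Y l k ->
  iso_num Y = (iso_num (remove_simplicial Y l k)).+1 /\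
  br_num Y = (br_num (remove_simplicial Y l k)).+1.
Proof.
move=> Hs; split; apply/eqP; rewrite eqn_leq.
  by rewrite iso1 // iso2.
by rewrite br1 // br2.
Qed.
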